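(* Let $G=(V,E,\omega)$ be a graph and let $S_m\in st(G)$. If $S_m\subseteq S_{m-1}\subseteq\dots\subseteq S_1\subseteq V$, then $S_1,\dots,S_{m-1},S_m$ induces a sequence of reductions on $G$, and $\mathcal{R}(G;S_1,\dots,S_{m-1},S_m)=\mathcal{R}_{S_m}(G)$.
   Context: Let $\mathbb{W}$ be the field of rational functions $p(\lambda)/q(\lambda)$ in a complex variable $\lambda$ with $p,q\in\mathbb{C}[\lambda]$, $q\neq 0$. A graph $G=(V,E,\omega)$ is a finite directed graph with vertex set $V=\{v_1,\dots,v_n\}$, edge set $E$ (loops allowed, at most one edge $e_{ij}$ from $v_i$ to $v_j$) and edge weights $\omega:E\to\mathbb{W}\setminus\{0\}$; set $\omega(e_{ij})=0$ if there is no edge from $v_i$ to $v_j$. For $U\subseteq V$, $G|_U$ is the induced subgraph on $U$; $\bar S=V\setminus S$; $\ell(G)$ is $G$ with all loops removed. A path is a sequence $u_1,\dots,u_m$ ($m\ge 2$) of distinct vertices with an edge from $u_k$ to $u_{k+1}$ for each $k$; a cycle is such a sequence with $u_1=u_m$ and $u_1,\dots,u_{m-1}$ distinct; $u_2,\dots,u_{m-1}$ are the interior vertices. A nonempty $S\subseteq V$ is a structural set of $G$ if $\ell(G)|_{\bar S}$ contains no cycles and $\omega(e_{ii})\neq\lambda$ (as elements of $\mathbb{W}$) for every $v_i\in\bar S$; $st(G)$ is the set of structural sets. For $S\in st(G)$ and $v_i,v_j\in S$, $\mathcal{B}_{ij}(G;S)$ is the set of paths or cycles from $v_i$ to $v_j$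 with no interior vertex in $S$. For $\beta=u_1,\dots,u_m$ the branch product is $\mathcal{P}_\omega(\beta)=\omega(u_1u_2)\prod_{k=2}^{m-1}\frac{\omega(u_ku_{k+1})}{\lambda-\omega(u_ku_k)}$ ($=\omega(u_1u_2)$ if $m=2$), $\omega(uu')$ being the weight of the edge from $u$ to $u'$. The isospectral reduction $\mathcal{R}_S(G)$ is the graph with vertex set $S$, an edge from $v_i$ to $v_j$ iff $\mathcal{B}_{ij}(G;S)\neq\emptyset$, of weight $\sum_{\beta\in\mathcal{B}_{ij}(G;S)}\mathcal{P}_\omega(\beta)$. Sets $S_m\subseteq\dots\subseteq S_1\subseteq V$ induce a sequence of reductions on $G$ if $S_1\in st(G)$ and, setting $\mathcal{R}_1(G)=\mathcal{R}_{S_1}(G)$, for each $1\le i\le m-1$ one has $S_{i+1}\in st(\mathcal{R}_i(G))$, with $\mathcal{R}_{i+1}(G)=\mathcal{R}_{S_{i+1}}(\mathcal{R}_i(G))$; then $\mathcal{R}(G;S_1,\dots,S_m)=\mathcal{R}_m(G)$, and $S_m$ is the final vertex set. *)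

(* Defs.v *)
From HB Require Import structures.
From mathcomp Require Import all_boot all_order all_algebra.
From mathcomp Require Import fraction complex.
From mathcomp Require Import reals.
Set Implicit Arguments. Unset Strict Implicit. Unset Printing Implicit Defensive.
Import Order.TTheory GRing.Theory Num.Theory.
Local Open Scope ring_scope.

(* W = C(lambda): rational functions in one complex variable; C = R[i] with R : realType *)
Definition Wfield (R : realType) : fieldType := {fraction {poly R[i]}}.

Definition lam (R : realType) : Wfield R := @FracField.tofrac {poly R[i]} 'X.

(* A graph on a subset [verts] of a fixed finite vertex universe T;
   wt u v is the weight of the edge u -> v, with 0 meaning "no edge". *)
Record graph (T : finType) (R : realType) := Graph {
  verts : {set T};
  wt : T -> T -> Wfield R
}.

Section Graphs.
Variables (T : finType) (R : realType).
Implicit Types (G : graph T R) (S : {set T}).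

Definition edge G u v : bool := wt G u v != 0.

Definition no_cycle_outside G S : Prop :=
  forall (x : T) (c : seq T),
    uniq (x :: c) ->
    all (fun u => (u \in verts G) && (u \notin S)) (x :: c) ->
    ~~ path (fun a b => (a != b) && edge G a b) x (rcons c x).

Definition structural G S : Prop :=
  [/\ S != set0, S \subset verts G, no_cycle_outside G S &
      forall v, v \in verts G -> v \notin S -> wt G v v != lam R].

(* [p] is the list of interior vertices of a branch (path or cycle) from i to j
   in B_ij(G;S): the vertex sequence is i :: p ++ [:: j]. *)
Definition is_branch G S (i j : T) (p : seq T) : bool :=
  [&& (uniq (i :: rcons p j) || ((i == j) && uniq (i :: p))),
      all (fun u => (u \in verts G) && (u \notin S)) p &
      path (edge G) i (rcons p j)].

Fixpoint bprod G (a : T) (p : seq T) (j : T) : Wfield R :=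
  match p with
  | [::] => wt G a j
  | x :: p' => wt G a x * (bprod G x p' j / (lam R - wt G x x))
  end.

(* Sum over all branches in B_ij(G;S); a branch has at most #|T| interior vertices. *)
Definition branch_sum G S (i j : T) : Wfield R :=
  \sum_(k < #|T|.+1) \sum_(t : k.-tuple T | is_branch G S i j t) bprod G i t j.

Definition reduction G S : graph T R :=
  Graph S (fun i j => if (i \in S) && (j \in S) then branch_sum G S i j else 0).

Fixpoint induces_seq G (ss : seq {set T}) : Prop :=
  match ss with
  | [::] => True
  | X :: ss' => structural G X /\ induces_seq (reduction G X) ss'
  end.

Fixpoint reduction_seq G (ss : seq {set T}) : graph T R :=
  match ss with
  | [::] => G
  | X :: ss' => reduction_seq (reduction G X) ss'
  end.

Definition graph_eq (G H : graph T R) : Prop :=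
  verts G = verts H /\
  forall u v, u \in verts G -> v \in verts G -> wt G u v = wt H u v.

End Graphs.

(* Main.v *)
Require Import Defs.
From HB Require Import structures.
From mathcomp Require Import all_boot all_order all_algebra.
From mathcomp Require Import fraction complex reals.
From mathcomp Require Import zify.
Set Implicit Arguments. Unset Strict Implicit. Unset Printing Implicit Defensive.
Import Order.TTheory GRing.Theory Num.Theory.
Local Open Scope ring_scope.

Section Gen.
Variable T : finType.

Lemma walk_cycle (r : rel T) x p : path r x p -> ~~ uniq (x :: p) ->
  exists y c, [/\ uniq (y :: c), path r y (rcons c y) & {subset y :: c <= x :: p}].
Proof.
move: {2}(size p) (leqnn (size p)) => n; elim: n x p => [|n IH] x p.
  by case: p.
move=> Hs Hp Hu.
have [Hx|Hx] := boolP (x \in p).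
  case/splitPr: Hx Hs Hp Hu => p1 p2 Hs.
  rewrite cat_path /= => /and3P [Hp1 Hl Hp2] Hu.
  have Hp1' : path r x (rcons p1 x) by rewrite rcons_path Hp1 Hl.
  have [Hu1|Hu1] := boolP (uniq (x :: p1)).
    exists x, p1; split => // z; rewrite !inE mem_cat => /orP [->//|->]; by rewrite orbT.
  have Hs1 : (size p1 <= n)%N by move: Hs; rewrite size_cat /=; lia.
  have [y [c [H1 H2 H3]]] := IH x p1 Hs1 Hp1 Hu1.
  exists y, c; split => // z /H3; rewrite !inE mem_cat => /orP [->//|->]; by rewrite orbT.
case: p Hs Hp Hu Hx => [//|y p'] Hs /= /andP [_ Hp'] Hu Hx.
have Hu' : ~~ uniq (y :: p') by move: Hu; rewrite /= Hx.
have [z [c [H1 H2 H3]]] := IH y p' Hs Hp' Hu'.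
exists z, c; split => // w /H3 Hw; by rewrite inE Hw orbT.
Qed.

Lemma upath (e : rel T) x s : uniq (x :: s) -> path e x s ->
  path (fun a b => (a != b) && e a b) x s.
Proof.
elim: s x => [//|y s IH] x Hu /= /andP [Hxy Hp].
move: Hu; rewrite [uniq _]/= => /andP [Hx Hu].
rewrite Hxy andbT IH // andbT.
by apply/eqP => Hxy'; move: Hx; rewrite Hxy' inE eqxx.
Qed.

Lemma uniq_size (s : seq T) : uniq s -> (size s <= #|T|)%N.
Proof. move=> /card_uniqP H; rewrite -H; apply: (max_card (mem s)). Qed.

Lemma sum_nz (I : finType) (V : zmodType) (P : pred I) (F : I -> V) :
  \sum_(y | P y) F y != 0 -> exists y, P y && (F y != 0).
Proof.
case: (boolP [exists y, P y && (F y != 0)]) => [/existsP//|/existsPn H].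
by rewrite big1 ?eqxx // => y Py; move: (H y); rewrite Py /= negbK => /eqP.
Qed.

Lemma big_tuple_cons (V : zmodType) k (P : seq T -> bool) (F : seq T -> V) :
  \sum_(t : k.+1.-tuple T | P t) F t =
  \sum_(y : T) \sum_(t : k.-tuple T | P (y :: t)) F (y :: t).
Proof.
rewrite pair_big_dep /=.
rewrite (reindex (fun p : T * k.-tuple T => [tuple of p.1 :: p.2])) /=.
  by apply: eq_bigr.
exists (fun t : k.+1.-tuple T => (thead t, [tuple of behead t])).
  by move=> [y t] _ /=; congr pair; apply: val_inj.
by move=> t _; rewrite [in RHS](tuple_eta t); apply: val_inj.
Qed.

Lemma big_tuple_nil (V : zmodType) (P : seq T -> bool) (F : seq T -> V) :
  \sum_(t : 0.-tuple T | P t) F t = if P [::] then F [::] else 0.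
Proof.
rewrite big_mkcond (bigD1 [tuple]) //= big1 ?addr0 // => t.
by rewrite (tuple0 t) => /negP.
Qed.

Variable R : realType.
Implicit Types (G : graph T R) (S : {set T}).

Lemma no_walk G S x p : no_cycle_outside G S ->
  all (fun u => (u \in verts G) && (u \notin S)) (x :: p) ->
  path (fun a b => (a != b) && edge G a b) x p -> uniq (x :: p).
Proof.
move=> Hnc Hall Hp; apply/negPn/negP => Hu.
have [y [c [H1 H2 H3]]] := walk_cycle Hp Hu.
have Hall2 : all (fun u => (u \in verts G) && (u \notin S)) (y :: c).
  by apply/allP => z /H3 Hz; exact: (allP Hall z Hz).
by move: (Hnc y c H1 Hall2); rewrite H2.
Qed.

Lemma uniq_sol G S (c u v : T -> Wfield R) : no_cycle_outside G S ->
  (forall x, (x \in verts G) && (x \notin S) -> u x = c x +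
     \sum_(y | (y \in verts G) && (y \notin S) && (y != x))
        (wt G x y / (lam R - wt G y y)) * u y) ->
  (forall x, (x \in verts G) && (x \notin S) -> v x = c x +
     \sum_(y | (y \in verts G) && (y \notin S) && (y != x))
        (wt G x y / (lam R - wt G y y)) * v y) ->
  forall x, (x \in verts G) && (x \notin S) -> u x = v x.
Proof.
move=> Hnc Hu Hv.
have Hw : forall x, (x \in verts G) && (x \notin S) -> u x - v x =
     \sum_(y | (y \in verts G) && (y \notin S) && (y != x))
        (wt G x y / (lam R - wt G y y)) * (u y - v y).
  move=> x Dx; rewrite Hu // Hv // opprD addrACA subrr add0r -sumrB.
  by apply: eq_bigr => y _; rewrite mulrBr.
have Hn : forall n x, (x \in verts G) && (x \notin S) -> u x - v x != 0 ->
    exists p, [/\ size p = n, all (fun u => (u \in verts G) && (u \notin S)) p &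
       path (fun a b => (a != b) && edge G a b) x p].
  elim => [|n IH] x Dx Hx; first by exists [::].
  move: Hx; rewrite Hw // => /sum_nz [y] /andP [H1 Hy].
  move: H1 => /andP [/andP [Hy1 Hy2] Hyx].
  have Hwy : u y - v y != 0 by apply: contraNneq Hy => ->; rewrite mulr0.
  have Hay : wt G x y != 0 by apply: contraNneq Hy => ->; rewrite !mul0r.
  have [p [Hs Hall Hp]] := IH y (introT andP (conj Hy1 Hy2)) Hwy.
  exists (y :: p); split => /=; first by rewrite Hs.
    by rewrite Hy1 Hy2 Hall.
  apply/andP; split; last exact: Hp.
  by apply/andP; split; [rewrite eq_sym | exact: Hay].
move=> x Dx; apply/eqP; rewrite -subr_eq0; apply/negPn/negP => Hx.
have [p [Hs Hall Hp]] := Hn #|T| x Dx Hx.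
have Hall2 : all (fun u => (u \in verts G) && (u \notin S)) (x :: p).
  by rewrite /= Dx Hall.
have := uniq_size (no_walk Hnc Hall2 Hp).
by rewrite /= Hs ltnn.
Qed.

Lemma branch_nz G S a b : branch_sum G S a b != 0 -> exists p, is_branch G S a b p.
Proof.
by rewrite /branch_sum => /sum_nz [k /= /sum_nz [t /andP [Ht _]]]; exists t.
Qed.

Lemma branch_0 G S a b : (forall p, ~~ is_branch G S a b p) -> branch_sum G S a b = 0.
Proof.
by move=> H; rewrite /branch_sum big1 // => k _; rewrite big1 // => t Ht; move: (H t); rewrite Ht.
Qed.

Lemma branch_head G S a j y t : is_branch G S a j (y :: t) ->
  [&& y \in verts G, y \notin S & y != a].
Proof.
case/and3P => Hu /andP [/andP [Hy1 Hy2] _] _; rewrite Hy1 Hy2 /=.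
case/orP: Hu => [Hu | /andP [_ Hu]]; move: Hu => /= /andP [Ha _];
  by apply: contraNneq Ha => ->; rewrite inE eqxx.
Qed.

Lemma branch_cons G S a j y t : no_cycle_outside G S -> a \in verts G -> j \in S ->
  y \in verts G -> y \notin S -> y != a -> edge G a y ->
  is_branch G S a j (y :: t) = is_branch G S y j t.
Proof.
move=> Hnc Ha Hj Hy1 Hy2 Hya Hay.
have Hyj : (y == j) = false by apply/eqP => Hyj; move: Hy2; rewrite Hyj Hj.
apply/idP/idP.
  case/and3P => Hu Hall0 Hp.
  have /andP [_ Hall] : (y \in verts G) && (y \notin S) &&
     all (fun u => (u \in verts G) && (u \notin S)) t := Hall0.
  apply/and3P; split => //; last by move: Hp => /= /andP [].
  rewrite Hyj orbF.
  case/orP: Hu => [Hu | /andP [/eqP Haj Hu]].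
    by move: Hu; rewrite rcons_cons cons_uniq => /andP [].
  rewrite -rcons_cons rcons_uniq -Haj.
  by move: Hu; rewrite cons_uniq => /andP [-> ->].
case/and3P => Hu Hall Hp.
move: Hu; rewrite Hyj orbF => Hu.
have Hall' : all (fun u => (u \in verts G) && (u \notin S)) (y :: t) by rewrite /= Hy1 Hy2 Hall.
have Hut : uniq (y :: t) by move: Hu; rewrite -rcons_cons rcons_uniq => /andP [].
have Hna : a \notin y :: t.
  case: (boolP (a \in S)) => HaS.
    by apply/negP => Hin; move: (allP Hall' a Hin); rewrite HaS andbF.
  have Hpt : path (edge G) y t by move: Hp; rewrite rcons_path => /andP [].
  have := @no_walk G S a (y :: t) Hnc.
  have Hay' : a != y by rewrite eq_sym.
  have H1 : all (fun u => (u \in verts G) && (u \notin S)) (a :: y :: t) by rewrite /= Ha HaS Hy1 Hy2 Hall.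
  have H2 : path (fun a b => (a != b) && edge G a b) a (y :: t).
    by rewrite /= Hay' Hay upath.
  by move=> /(_ H1 H2); rewrite cons_uniq => /andP [].
have Hju : j \notin y :: t by move: Hu; rewrite -rcons_cons rcons_uniq => /andP [].
apply/and3P; split => //; last by rewrite rcons_cons /= Hay Hp.
case: (boolP (a == j)) => Haj.
  by apply/orP; right; rewrite cons_uniq Hna Hut.
apply/orP; left.
rewrite cons_uniq mem_rcons inE negb_or Haj Hna rcons_uniq Hju.
exact: Hut.
Qed.

Lemma branch_size G S y j t : y != j -> is_branch G S y j t -> ((size t).+2 <= #|T|)%N.
Proof.
move=> Hyj /and3P [Hu _ _]; move: Hu; rewrite (negbTE Hyj) orbF => /uniq_size.
by rewrite /= size_rcons.
Qed.

Lemma rec_y G S a j y : no_cycle_outside G S -> j \in S -> a \in verts G ->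
  \sum_(0 <= k < #|T|) \sum_(t : k.-tuple T | is_branch G S a j (y :: t))
      (wt G a y * (bprod G y t j / (lam R - wt G y y))) =
  if (y \in verts G) && (y \notin S) && (y != a) then
     (wt G a y / (lam R - wt G y y)) * branch_sum G S y j else 0.
Proof.
move=> Hnc Hj Ha.
have Ebs : forall x, branch_sum G S x j = \sum_(0 <= k < #|T|.+1)
    \sum_(t : k.-tuple T | is_branch G S x j t) bprod G x t j.
  by move=> x; rewrite /branch_sum big_mkord.
case: (boolP (edge G a y)) => Hay; last first.
  have Hw : wt G a y = 0 by move/negPn/eqP: Hay.
  rewrite big1 => [|k _]; last by rewrite big1 // => t _; rewrite Hw mul0r.
  by rewrite Hw !mul0r; case: ifP.
case: (boolP ((y \in verts G) && (y \notin S) && (y != a))) => HD; last first.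
  rewrite big1 // => k _; rewrite big1 // => t Ht.
  case/and3P: (branch_head Ht) => H1 H2 H3.
  by move: HD; rewrite H1 H2 H3.
case/andP: HD => /andP [Hy1 Hy2] Hya.
have Hyj : y != j by apply: contraNneq Hy2 => ->.
rewrite Ebs big_nat_recr //= [X in _ * (_ + X)]big1 ?addr0; last first.
  move=> t Ht; have := branch_size Hyj Ht; rewrite size_tuple.
  by move=> /(leq_trans (leqnSn _)); rewrite ltnn.
rewrite mulr_sumr; apply: eq_bigr => k _; rewrite mulr_sumr.
apply: eq_big => [t|t _]; first exact: branch_cons.
by rewrite -!mulrA [_^-1 * _]mulrC.
Qed.

Lemma gsplit (V : zmodType) n (F : forall k : nat, k.-tuple T -> V) :
  \sum_(k < n.+1) \sum_(t : k.-tuple T) F k t =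
  \sum_(t : 0.-tuple T) F 0 t + \sum_(0 <= k < n) \sum_(t : k.+1.-tuple T) F k.+1 t.
Proof.
by rewrite big_ord_recl -(big_mkord xpredT (fun k => \sum_(t : k.+1.-tuple T) F k.+1 t)).
Qed.


Lemma bs_split G S a j : branch_sum G S a j =
  (\sum_(t : 0.-tuple T | is_branch G S a j t) bprod G a t j) +
  \sum_(0 <= k < #|T|) \sum_(t : k.+1.-tuple T | is_branch G S a j t) bprod G a t j.
Proof.
rewrite /branch_sum.
transitivity (\sum_(k < #|T|.+1) \sum_(t : k.-tuple T)
   (if is_branch G S a j t then bprod G a t j else 0)).
  by apply: eq_bigr => k _; rewrite big_mkcond.
rewrite (gsplit #|T| (fun k (t : k.-tuple T) => if is_branch G S a j t then bprod G a t j else 0)).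
congr (_ + _); first by rewrite [RHS]big_mkcond.
by apply: eq_bigr => k _; rewrite [RHS]big_mkcond.
Qed.
Lemma isb_nil G S a j : is_branch G S a j [::] = edge G a j.
Proof.
apply/idP/idP; first by case/and3P => _ _ /andP [].
move=> H; apply/and3P; split; [| by [] | by rewrite /= H].
case: (boolP (a == j)) => Haj; first by apply/orP; right.
by apply/orP; left; rewrite /= mem_seq1 andbT.
Qed.

Lemma if_edge G a j : (if edge G a j then wt G a j else 0) = wt G a j.
Proof. by case: (boolP (edge G a j)) => // /negPn /eqP ->. Qed.

Lemma bs_nil G S a j : \sum_(t : 0.-tuple T | is_branch G S a j t) bprod G a t j = wt G a j.
Proof.
rewrite (big_tuple_nil (fun s => is_branch G S a j s) (fun s => bprod G a s j)).
by rewrite isb_nil if_edge.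
Qed.

Lemma bs_cons G S a j :
  \sum_(0 <= k < #|T|) \sum_(t : k.+1.-tuple T | is_branch G S a j t) bprod G a t j =
  \sum_(y : T) \sum_(0 <= k < #|T|)
   \sum_(t : k.-tuple T | is_branch G S a j (y :: t))
      (wt G a y * (bprod G y t j / (lam R - wt G y y))).
Proof.
rewrite [RHS]exchange_big; apply: eq_bigr => k _.
by rewrite (big_tuple_cons k (fun s => is_branch G S a j s) (fun s => bprod G a s j)).
Qed.

Lemma rec G S a j : no_cycle_outside G S -> j \in S -> a \in verts G ->
  branch_sum G S a j = wt G a j +
  \sum_(y | (y \in verts G) && (y \notin S) && (y != a))
     (wt G a y / (lam R - wt G y y)) * branch_sum G S y j.
Proof.
move=> Hnc Hj Ha.
rewrite bs_split bs_nil bs_cons; congr (_ + _).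
rewrite [RHS]big_mkcond; apply: eq_bigr => y _; exact: rec_y.
Qed.
End Gen.

Section Gen2.
Variable T : finType.
Variable R : realType.
Lemma sum_drop (P : pred T) (F : T -> Wfield R) a : (P a -> F a = 0) ->
  \sum_(y | P y) F y = \sum_(y | P y && (y != a)) F y.
Proof.
move=> H; rewrite (bigID (pred1 a)) /= [X in X + _]big1 ?add0r //.
by move=> y /andP [Py /eqP Ey]; rewrite Ey in Py *; exact: H.
Qed.

Section Comp.
Variables (G : graph T R) (S1 Sm : {set T}).
Hypotheses (HS1 : S1 \subset verts G) (Hsub : Sm \subset S1) (Hst : structural G Sm).

Lemma nc2 : no_cycle_outside G Sm.
Proof. by case: Hst. Qed.

Lemma notS1 x : x \notin S1 -> x \notin Sm.
Proof. by apply: contraNN => /(subsetP Hsub). Qed.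

Lemma inV x : x \in S1 -> x \in verts G.
Proof. exact: (subsetP HS1). Qed.

Lemma st1 : structural G S1.
Proof.
case: Hst => Hne Hsv Hnc Hl; split => //.
- apply: contraNneq Hne => E; by rewrite -subset0 -E.
- move=> x c Hu Hall; apply: Hnc => //; apply: sub_all Hall => z /andP [-> /notS1 ->].
  by [].
- by move=> v Hv /notS1; exact: Hl.
Qed.

Lemma nc1 : no_cycle_outside G S1.
Proof. by case: st1. Qed.

Lemma noback a z p : a \in S1 -> a \notin Sm -> z \in verts G -> z \notin S1 ->
  edge G a z -> ~~ is_branch G S1 z a p.
Proof.
move=> Ha1 Ha2 Hz1 Hz2 Haz; apply/negP => Hb.
have Hza : (z == a) = false by apply/eqP => E; move: Hz2; rewrite E Ha1.
case/and3P: Hb => Hu Hall Hp.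
move: Hu; rewrite Hza orbF => Hu.
have Haz' : a != z by rewrite eq_sym Hza.
have H1 : all (fun u => (u \in verts G) && (u \notin Sm)) (a :: z :: rcons p a).
  rewrite /= all_rcons (inV Ha1) Ha2 Hz1 (notS1 Hz2) /=.
  by apply: sub_all Hall => u /andP [-> /notS1 ->].
have H2 : path (fun a b => (a != b) && edge G a b) a (z :: rcons p a).
  by rewrite /= Haz' Haz upath.
have := no_walk nc2 H1 H2.
by rewrite cons_uniq in_cons mem_rcons in_cons eqxx !orbT.
Qed.

Lemma loop v : v \in S1 -> v \notin Sm -> branch_sum G S1 v v = wt G v v.
Proof.
move=> Hv1 Hv2; rewrite (rec nc1 Hv1 (inV Hv1)) big1 ?addr0 //.
move=> y /andP [/andP [Hy1 Hy2] _].
case: (boolP (edge G v y)) => Hvy.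
  by rewrite branch_0 ?mulr0 // => p; exact: noback.
by move/negPn/eqP: Hvy => ->; rewrite !mul0r.
Qed.

Lemma lift_walk x q : x \in S1 ->
  all (fun u => (u \in S1) && (u \notin Sm)) q ->
  path (fun a b => (a != b) && edge (reduction G S1) a b) x q ->
  exists q', [/\ path (fun a b => (a != b) && edge G a b) x q',
     all (fun u => (u \in verts G) && (u \notin Sm)) q',
     last x q' = last x q & (size q <= size q')%N].
Proof.
elim: q x => [|y q IH] x Hx Hall Hp.
  by exists [::]; split; [exact: isT | exact: isT | reflexivity | exact: leqnn].
have /andP [/andP [Hy1 Hy2] Hall'] : (y \in S1) && (y \notin Sm) &&
   all (fun u => (u \in S1) && (u \notin Sm)) q := Hall.
move: Hp => /= /andP [/andP [Hxy He] Hp].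
move: He; rewrite /edge /= Hx Hy1 /= => /branch_nz [p Hb].
have [q'' [H1 H2 H3 H4]] := IH y Hy1 Hall' Hp.
case/and3P: Hb => Hu Hallp Hpp.
move: Hu; rewrite (negbTE Hxy) orbF => Hu.
exists (rcons p y ++ q''); split.
- by rewrite cat_path last_rcons H1 andbT upath.
- rewrite all_cat all_rcons (inV Hy1) Hy2 H2 /= andbT.
  by apply: sub_all Hallp => u /andP [-> /notS1 ->].
- by rewrite last_cat last_rcons H3.
- by rewrite size_cat size_rcons /= addSn ltnS (leq_trans H4) // leq_addl.
Qed.

Lemma nc_R1 : no_cycle_outside (reduction G S1) Sm.
Proof.
move=> x c Hu Hall; apply/negP => Hp.
have /andP [/andP [Hx1 Hx2] Hallc] : (x \in S1) && (x \notin Sm) &&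
   all (fun u => (u \in S1) && (u \notin Sm)) c := Hall.
have Hallq : all (fun u => (u \in S1) && (u \notin Sm)) (rcons c x).
  by rewrite all_rcons Hx1 Hx2 Hallc.
have [q' [H1 H2 H3 H4]] := lift_walk Hx1 Hallq Hp.
have H5 : all (fun u => (u \in verts G) && (u \notin Sm)) (x :: q').
  by rewrite /= (inV Hx1) Hx2 H2.
have := no_walk nc2 H5 H1.
rewrite last_rcons in H3.
case: q' H1 H2 H3 H4 H5 => [|z q''] H1 H2 H3 H4 H5.
  by rewrite size_rcons in H4.
rewrite cons_uniq => /andP [/negP []].
by rewrite -[X in X \in _]H3 /= mem_last.
Qed.

Lemma st_R1 : structural (reduction G S1) Sm.
Proof.
case: Hst => Hne Hsv Hnc Hl; split => //.
- exact: nc_R1.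
- move=> v /= Hv1 Hv2; rewrite Hv1 /= loop //; exact: Hl (inV Hv1) Hv2.
Qed.

End Comp.
End Gen2.


Section Main.
Variables (T : finType) (R : realType).
Variables (G : graph T R) (S1 Sm : {set T}).
Hypotheses (HS1 : S1 \subset verts G) (Hsub : Sm \subset S1) (Hst : structural G Sm).
Variable j : T.
Hypothesis Hj : j \in Sm.

Local Notation g x := (branch_sum G Sm x j).
Local Notation e z b := (branch_sum G S1 z b).
Local Notation h y := (branch_sum G Sm y j / (lam R - wt G y y)).
Local Notation A a z := (wt G a z / (lam R - wt G z z)).

Lemma HjS1 : j \in S1.
Proof. exact: (subsetP Hsub j Hj). Qed.

Lemma phi_eq z : (z \in verts G) && (z \notin S1) ->
  g z = e z j + \sum_(y | (y \in S1) && (y \notin Sm)) e z y * h y.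
Proof.
move: z; apply: (uniq_sol (c := fun w => wt G w j + \sum_(y | (y \in S1) && (y \notin Sm)) wt G w y * h y)
   (u := fun w => g w) (v := fun w => e w j + \sum_(y | (y \in S1) && (y \notin Sm)) e w y * h y)
   (nc1 HS1 Hsub Hst)) => x /andP [Hx1 Hx2].
- rewrite (rec (nc2 Hst) Hj Hx1) (bigID (fun y => y \in S1)) /= addrA.
  congr (_ + _ + _).
    apply: eq_big => [y|y _]; last by rewrite -!mulrA [_^-1 * _]mulrC.
    case Hy: (y \in S1); last by rewrite !andbF.
    have Hyx : y != x by apply: contraNneq Hx2 => <-.
    by rewrite (inV HS1 Hy) Hyx /= !andbT.
  apply: eq_bigl => y.
  case Hy: (y \in S1); first by rewrite /= !andbF.
  have Hy' : (y \in Sm) = false by apply/negbTE/(notS1 Hsub); rewrite Hy.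
  by rewrite Hy' /= !andbT.
- rewrite /= (rec (nc1 HS1 Hsub Hst) HjS1 Hx1).
  have E : \sum_(y | (y \in S1) && (y \notin Sm)) e x y * h y =
     \sum_(y | (y \in S1) && (y \notin Sm)) wt G x y * h y +
     \sum_(z | (z \in verts G) && (z \notin S1) && (z != x))
        A x z * \sum_(y | (y \in S1) && (y \notin Sm)) e z y * h y.
    rewrite (eq_bigr (fun y => wt G x y * h y +
        \sum_(z | (z \in verts G) && (z \notin S1) && (z != x)) A x z * (e z y * h y))).
      rewrite big_split /= [X in _ + X]exchange_big /=; congr (_ + _).
      by apply: eq_bigr => z _; rewrite mulr_sumr.
    move=> y /andP [Hy1 _]; rewrite (rec (nc1 HS1 Hsub Hst) Hy1 Hx1) mulrDl mulr_suml.
    by congr (_ + _); apply: eq_bigr => z _; rewrite [RHS]mulrA.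
  rewrite E (eq_bigr _ (fun z _ => mulrDr _ _ _)) big_split /=.
  by rewrite addrACA.
Qed.

Lemma star a : a \in S1 ->
  g a = wt (reduction G S1) a j +
  \sum_(y | (y \in verts (reduction G S1)) && (y \notin Sm) && (y != a))
     (wt (reduction G S1) a y / (lam R - wt (reduction G S1) y y)) * g y.
Proof.
move=> Ha.
have Ew : forall x y, x \in S1 -> y \in S1 -> wt (reduction G S1) x y = e x y.
  by move=> x y Hx Hy; rewrite /= Hx Hy.
have ES : \sum_(y | (y \in verts (reduction G S1)) && (y \notin Sm) && (y != a))
     (wt (reduction G S1) a y / (lam R - wt (reduction G S1) y y)) * g y =
   \sum_(y | (y \in S1) && (y \notin Sm) && (y != a)) e a y * h y.
  apply: eq_bigr => y /andP [/andP [Hy1 Hy2] _].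
  rewrite !Ew // (loop HS1 Hsub Hst Hy1 Hy2).
  by rewrite -!mulrA [_^-1 * _]mulrC.
rewrite ES Ew ?HjS1 //.
rewrite (rec (nc2 Hst) Hj (inV HS1 Ha)) (bigID (fun y => y \in S1)) /=.
rewrite (rec (nc1 HS1 Hsub Hst) HjS1 (inV HS1 Ha)).
have E1 : \sum_(y | (y \in verts G) && (y \notin Sm) && (y != a) && (y \in S1)) A a y * g y =
   \sum_(y | (y \in S1) && (y \notin Sm) && (y != a)) wt G a y * h y.
  apply: eq_big => [y|y _]; last by rewrite -!mulrA [_^-1 * _]mulrC.
  case Hy: (y \in S1); last by rewrite !andbF.
  by rewrite (inV HS1 Hy) /= !andbT.
have E2 : \sum_(y | (y \in verts G) && (y \notin Sm) && (y != a) && ~~ (y \in S1)) A a y * g y =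
   \sum_(z | (z \in verts G) && (z \notin S1) && (z != a)) A a z * e z j +
   \sum_(y | (y \in S1) && (y \notin Sm) && (y != a))
      (\sum_(z | (z \in verts G) && (z \notin S1) && (z != a)) A a z * e z y) * h y.
  transitivity (\sum_(z | (z \in verts G) && (z \notin S1) && (z != a)) A a z * g z).
    apply: eq_bigl => z.
    case Hz: (z \in S1); first by rewrite /= !andbF.
    have Hz' : (z \in Sm) = false by apply/negbTE/(notS1 Hsub); rewrite Hz.
    by rewrite Hz' /= !andbT.
  transitivity (\sum_(z | (z \in verts G) && (z \notin S1) && (z != a))
      A a z * (e z j + \sum_(y | (y \in S1) && (y \notin Sm)) e z y * h y)).
    by apply: eq_bigr => z /andP [Hz _]; rewrite phi_eq.
  rewrite (eq_bigr _ (fun z _ => mulrDr _ _ _)) big_split /=; congr (_ + _).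
  transitivity (\sum_(z | (z \in verts G) && (z \notin S1) && (z != a))
      \sum_(y | (y \in S1) && (y \notin Sm) && (y != a)) A a z * (e z y * h y)).
    apply: eq_bigr => z /andP [/andP [Hz1 Hz2] _]; rewrite mulr_sumr.
    apply: (sum_drop (P := fun y => (y \in S1) && (y \notin Sm))) => /andP [Ha1 Ha2].
    case: (boolP (edge G a z)) => Haz.
      have Hb : e z a = 0.
        by apply: branch_0 => p; exact: (noback HS1 Hsub Hst p Ha1 Ha2 Hz1 Hz2 Haz).
      by rewrite Hb mul0r mulr0.
    by move/negPn/eqP: Haz => ->; rewrite !mul0r.
  rewrite exchange_big /=; apply: eq_bigr => y _; rewrite [RHS]mulr_suml.
  by apply: eq_bigr => z _; rewrite mulrA.
have E3 : \sum_(y | (y \in S1) && (y \notin Sm) && (y != a)) e a y * h y =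
   \sum_(y | (y \in S1) && (y \notin Sm) && (y != a)) wt G a y * h y +
   \sum_(y | (y \in S1) && (y \notin Sm) && (y != a))
      (\sum_(z | (z \in verts G) && (z \notin S1) && (z != a)) A a z * e z y) * h y.
  rewrite -big_split; apply: eq_bigr => y /andP [/andP [Hy1 _] _].
  by rewrite (rec (nc1 HS1 Hsub Hst) Hy1 (inV HS1 Ha)) mulrDl.
rewrite E1 E2 E3.
by rewrite addrA addrACA.
Qed.

Lemma main i : i \in Sm -> branch_sum (reduction G S1) Sm i j = g i.
Proof.
move=> Hi.
have HiS1 : i \in S1 by exact: (subsetP Hsub i Hi).
have Heq := uniq_sol (c := fun x => wt (reduction G S1) x j)
   (u := fun x => branch_sum (reduction G S1) Sm x j) (v := fun x => g x)
   (nc_R1 HS1 Hsub Hst)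
   (fun x H => rec (nc_R1 HS1 Hsub Hst) Hj (proj1 (andP H)))
   (fun x H => star (proj1 (andP H))).
rewrite (rec (nc_R1 HS1 Hsub Hst) Hj (HiS1 : i \in verts (reduction G S1))) (star HiS1).
congr (_ + _); apply: eq_bigr => y /andP [Hy _].
by rewrite (Heq y Hy).
Qed.

End Main.


Lemma two_step (T : finType) (R : realType) (G : graph T R) (S1 Sm : {set T}) :
  S1 \subset verts G -> Sm \subset S1 -> structural G Sm ->
  structural (reduction G S1) Sm /\
  graph_eq (reduction (reduction G S1) Sm) (reduction G Sm).
Proof.
move=> HS1 Hsub Hst; split; first exact: st_R1.
split => // u v /= Hu Hv; rewrite Hu Hv /=.
exact: (main HS1 Hsub Hst Hv Hu).
Qed.

Lemma chain_last (T : finType) (X : {set T}) ss (Sm : {set T}) :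
  path (fun A B : {set T} => B \subset A) X (rcons ss Sm) -> Sm \subset X.
Proof.
elim: ss X => [|Y ss IH] X /=; first by rewrite andbT.
by move=> /andP [HY Hp]; exact: subset_trans (IH _ Hp) HY.
Qed.

Lemma graph_eq_trans (T : finType) (R : realType) (A B C : graph T R) :
  graph_eq A B -> graph_eq B C -> graph_eq A C.
Proof.
move=> [E1 W1] [E2 W2]; split; first by rewrite E1.
by move=> u v Hu Hv; rewrite W1 // W2 // -E1.
Qed.

Theorem theorem2 (T : finType) (R : realType) (G : graph T R)
    (ss : seq {set T}) (Sm : {set T}) :
  structural G Sm ->
  path (fun A B : {set T} => B \subset A) (verts G) (rcons ss Sm) ->
  induces_seq G (rcons ss Sm) /\
  graph_eq (reduction_seq G (rcons ss Sm)) (reduction G Sm).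
Proof.
elim: ss G => [|S1 ss IH] G Hst Hp /=.
  by split; [split | split].
move: Hp => /andP [HS1 Hp].
have Hsub := chain_last Hp.
have [Hst1 Heq1] := two_step HS1 Hsub Hst.
have [IH1 IH2] := IH (reduction G S1) Hst1 Hp.
split; first by split => //; exact: (st1 HS1 Hsub Hst).
exact: graph_eq_trans IH2 Heq1.
Qed.
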